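(* Consider computation in the l2-MBQC setting described in the context, where the only correlated resources are independent copies of the bipartite quantum CHSH box. Then reliable computation is possible: there exists a constant $\delta<1/2$ such that for every $n\ge 1$ and every Boolean function $f:\{0,1\}^n\to\{0,1\}$ there is an l2-MBQC procedure using finitely many independent CHSH boxes which, on every input $\vec b\in\{0,1\}^n$, outputs $f(\vec b)$ with probability at least $1-\delta$.
   Context: l2-MBQC (''MBQC with mod-2 linear classical processing''): a classical control computer receives an input string $\vec b=b_1\dots b_n$. It has access to black boxes, each of which receives a one-bit input from the control computer and returns a one-bit output. The control computer is restricted to computing sums modulo 2 of subsets of the input bits, of previously received box outputs, and possibly the constant $1$; each box input (which may depend on earlier box outputs, i.e. adaptively) and the final output of the computation must be such mod-2 affine functions. The bipartite quantum CHSH box consists of two one-bit-in/one-bit-out boxes sharing the two-qubit state $(|00\rangle+|11\rangle)/\sqrt2$: on input $b_0$ the first box measures its qubit in the $Z$ basis if $b_0=0$ and in the $X$ basis if $b_0=1$; on input $b_1$ the second box measures in the eigenbasis of $(Z+X)/\sqrt2$ if $b_1=0$ and of $(X-Z)/\sqrt2$ if $b_1=1$; measurement outcome $+1$ is output as bit $0$ and $-1$ as bit $1$. For every input pair, the mod-2 sum of the two outputs equals $b_0\wedge b_1$ with probability $\cos^2(\pi/8)$. Different copies of the CHSH box are independent. *)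

(* Defs.v *)
From Stdlib Require Import Reals.
From mathcomp Require Import all_boot all_order all_algebra.
From mathcomp Require Import Rstruct.

Set Implicit Arguments.
Unset Strict Implicit.
Unset Printing Implicit Defensive.
Local Open Scope R_scope.

(* The observable cos(t) Z + sin(t) X on one qubit (real amplitudes)    *)
(* has eigenvector (cos(t/2), sin(t/2)) for outcome +1 (bit 0) and      *)
(* (-sin(t/2), cos(t/2)) for outcome -1 (bit 1).                        *)
(*   Z : t = 0,  X : t = PI/2,  (Z+X)/sqrt2 : t = PI/4,                  *)
(*   (X-Z)/sqrt2 : t = 3PI/4.                                           *)

Definition eigvec (t : R) (x : bool) (i : bool) : R :=
  if x then (if i then cos (t / 2) else - sin (t / 2))
  else (if i then sin (t / 2) else cos (t / 2)).

(* Measurement angle of the first box on input b0 (Z if 0, X if 1). *)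
Definition angleA (b0 : bool) : R := if b0 then PI / 2 else 0.
(* Measurement angle of the second box on input b1
   ((Z+X)/sqrt2 if 0, (X-Z)/sqrt2 if 1). *)
Definition angleB (b1 : bool) : R := if b1 then 3 * PI / 4 else PI / 4.

Definition bell (i j : bool) : R := if i == j then / sqrt 2 else 0.

(* Born rule: probability that the first box outputs x and the second box
   outputs y, on inputs b0 and b1 (all amplitudes are real). *)
Definition chsh_prob (b0 b1 x y : bool) : R :=
  let amp := (\sum_(i : bool) \sum_(j : bool)
                eigvec (angleA b0) x i * eigvec (angleB b1) y j * bell i j)%R
  in (amp * amp)%R.

(* A one-bit box is named by (i, s) : 'I_m * bool, the copy i and the   *)
(* side s (false = first box, true = second box).                       *)

Definition box (m : nat) := ('I_m * bool)%type.

Record affine (n m : nat) := Affine {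
  aff_const : bool;
  aff_in    : {ffun 'I_n -> bool};
  aff_box   : {ffun box m -> bool} }.

Definition aff_eval n m (A : affine n m) (b : 'I_n -> bool) (o : box m -> bool)
  : bool :=
  xorb (aff_const A)
   (xorb (\big[xorb/false]_(j < n) (aff_in A j && b j))
         (\big[xorb/false]_(k : box m) (aff_box A k && o k))).

(* A procedure: the boxes are queried in the order given by the injective
   ranking [order]; the input of each box is a mod-2 affine function of the
   input bits and of the outputs of the boxes queried before it (adaptivity);
   the final output is a mod-2 affine function of the input bits and all
   box outputs. *)
Record l2proc (n m : nat) := L2Proc {
  order : box m -> nat;
  order_inj : injective order;
  box_input : box m -> affine n m;
  box_input_causal :
    forall k k' : box m, aff_box (box_input k) k' -> (order k' < order k)%N;
  final_output : affine n m }.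

Definition record_prob n m (P : l2proc n m) (b : 'I_n -> bool)
  (o : {ffun box m -> bool}) : R :=
  (\prod_(i < m)
     chsh_prob (aff_eval (box_input P (i, false)) b o)
               (aff_eval (box_input P (i, true)) b o)
               (o (i, false)) (o (i, true)))%R.

Definition output_prob n m (P : l2proc n m) (b : 'I_n -> bool) (c : bool) : R :=
  (\sum_(o : {ffun box m -> bool})
     if aff_eval (final_output P) b o == c then record_prob P b o else 0)%R.

(* Main.v *)
From HB Require Import structures.
Require Import Defs.
From Stdlib Require Import Reals Lra Psatz.
From mathcomp Require Import all_boot all_order all_algebra.
From mathcomp Require Import Rstruct.

Set Implicit Arguments.
Unset Strict Implicit.
Unset Printing Implicit Defensive.

Lemma xorb_false_l' : left_id false xorb. Proof. by case. Qed.
Lemma xorb_false_r' : right_id false xorb. Proof. by move=> [] . Qed.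
Lemma xorb_assoc' : associative xorb. Proof. by do 3!case. Qed.
Lemma xorb_comm' : commutative xorb. Proof. by do 2!case. Qed.
HB.instance Definition _ := Monoid.isComLaw.Build bool false xorb xorb_assoc' xorb_comm' xorb_false_l'.

Lemma big_box_split m1 m2 (G : box (m1 + m2) -> bool) :
  \big[xorb/false]_(k : box (m1 + m2)) G k =
  xorb (\big[xorb/false]_(k : box m1) G (lshift m2 k.1, k.2))
       (\big[xorb/false]_(k : box m2) G (rshift m1 k.1, k.2)).
Proof.
rewrite (eq_bigr (fun k => G (k.1, k.2))); last by case.
rewrite -(pair_bigA _ (fun i s => G (i, s))) /= big_split_ord /=.
by rewrite !(pair_bigA _ (fun i s => G (_ i, s))).
Qed.

Section Lift.
Variables (n m1 m2 : nat).

Definition lft (o : {ffun box (m1 + m2) -> bool}) : {ffun box m1 -> bool} :=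
  [ffun k => o (lshift m2 k.1, k.2)].
Definition rgt (o : {ffun box (m1 + m2) -> bool}) : {ffun box m2 -> bool} :=
  [ffun k => o (rshift m1 k.1, k.2)].
Definition glue (o1 : {ffun box m1 -> bool}) (o2 : {ffun box m2 -> bool})
  : {ffun box (m1 + m2) -> bool} :=
  [ffun k => match split k.1 with inl i => o1 (i, k.2) | inr i => o2 (i, k.2) end].

Lemma lft_glue o1 o2 : lft (glue o1 o2) = o1.
Proof. by apply/ffunP => -[i s]; rewrite !ffunE /= (unsplitK (inl i)). Qed.
Lemma rgt_glue o1 o2 : rgt (glue o1 o2) = o2.
Proof. by apply/ffunP => -[i s]; rewrite !ffunE /= (unsplitK (inr i)). Qed.
Lemma glue_lr o : glue (lft o) (rgt o) = o.
Proof.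
apply/ffunP => -[i s]; rewrite !ffunE /=.
case: splitP => j /= eq.
  have -> : i = lshift m2 j by apply: val_inj.
  by rewrite ffunE.
have -> : i = rshift m1 j by apply: val_inj.
by rewrite ffunE.
Qed.

Lemma sum_glue (F : {ffun box (m1 + m2) -> bool} -> R) :
  (\sum_o F o = \sum_o1 \sum_o2 F (glue o1 o2))%R.
Proof.
rewrite pair_bigA /=.
rewrite (reindex (fun o => (lft o, rgt o))) /=.
  by apply: eq_bigr => o _; rewrite glue_lr.
exists (fun p => glue p.1 p.2) => [o _|[o1 o2] _] /=.
  by rewrite glue_lr.
by rewrite lft_glue rgt_glue.
Qed.

Definition liftL (A : affine n m1) : affine n (m1 + m2) :=
  Affine (aff_const A) (aff_in A)
   [ffun k => match split k.1 with inl i => aff_box A (i, k.2) | inr _ => false end].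
Definition liftR (A : affine n m2) : affine n (m1 + m2) :=
  Affine (aff_const A) (aff_in A)
   [ffun k => match split k.1 with inl _ => false | inr i => aff_box A (i, k.2) end].

Lemma big_xor_false (T : finType) : \big[xorb/false]_(k : T) false = false.
Proof. by rewrite big1. Qed.

Lemma aff_liftL A b (o : {ffun box (m1 + m2) -> bool}) : aff_eval (liftL A) b o = aff_eval A b (lft o).
Proof.
rewrite /aff_eval /= big_box_split; congr xorb; congr xorb.
rewrite (eq_bigr (fun k => aff_box A k && lft o k)); last first.
  by move=> [i s] _; rewrite !ffunE /= (unsplitK (inl _)).
rewrite [X in xorb _ X](eq_bigr (fun _ => false)); last first.
  by move=> [i s] _; rewrite !ffunE /= (unsplitK (inr _)).
by rewrite big_xor_false xorb_false_r'.
Qed.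

Lemma aff_liftR A b (o : {ffun box (m1 + m2) -> bool}) : aff_eval (liftR A) b o = aff_eval A b (rgt o).
Proof.
rewrite /aff_eval /= big_box_split; congr xorb; congr xorb.
rewrite [X in xorb _ X](eq_bigr (fun k => aff_box A k && rgt o k)); last first.
  by move=> [i s] _; rewrite !ffunE /= (unsplitK (inr _)).
rewrite [X in xorb X _](eq_bigr (fun _ => false)); last first.
  by move=> [i s] _; rewrite !ffunE /= (unsplitK (inl _)).
by rewrite big_xor_false xorb_false_l'.
Qed.

End Lift.

Section Juxt.
Variables (n m1 m2 : nat) (P : l2proc n m1) (Q : l2proc n m2).

Definition jorder (k : box (m1 + m2)) : nat :=
  match split k.1 with
  | inl i => (Defs.order P (i, k.2)).*2
  | inr i => (Defs.order Q (i, k.2)).*2.+1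
  end.

Lemma split_eq (i i' : 'I_(m1 + m2)) : split i = split i' -> i = i'.
Proof. by move=> E; rewrite -(splitK i) E splitK. Qed.

Lemma jorder_inj : injective jorder.
Proof.
move=> [i s] [i' s']; rewrite /jorder /=.
case E: (split i) => [j|j]; case E': (split i') => [j'|j'] => H.
- have /order_inj [Ej Es] : Defs.order P (j, s) = Defs.order P (j', s') by apply: double_inj.
  subst; by rewrite (split_eq (etrans E (esym E'))).
- by move/(congr1 odd): H; rewrite /= !odd_double.
- by move/(congr1 odd): H; rewrite /= !odd_double.
- have /order_inj [Ej Es] : Defs.order Q (j, s) = Defs.order Q (j', s').
    by apply: double_inj; case: H.
  subst; by rewrite (split_eq (etrans E (esym E'))).
Qed.

Definition jinput (k : box (m1 + m2)) : affine n (m1 + m2) :=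
  match split k.1 with
  | inl i => liftL m2 (box_input P (i, k.2))
  | inr i => liftR m1 (box_input Q (i, k.2))
  end.

Lemma jinput_causal k k' : aff_box (jinput k) k' -> jorder k' < jorder k.
Proof.
case: k k' => [i s] [i' s']; rewrite /jinput /jorder /=.
case E: (split i) => [j|j]; rewrite /= ffunE /=; case E': (split i') => [j'|j'] //.
- by move/box_input_causal; rewrite ltn_double.
- by move/box_input_causal; rewrite ltnS ltn_double.
Qed.

Definition juxt : l2proc n (m1 + m2) :=
  L2Proc jorder_inj jinput_causal (liftL m2 (final_output P)).

Lemma record_juxt b (o : {ffun box (m1 + m2) -> bool}) :
  record_prob juxt b o = (record_prob P b (lft o) * record_prob Q b (rgt o))%R.
Proof.
rewrite /record_prob big_split_ord /=; congr GRing.mul.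
  apply: eq_bigr => i _; rewrite /jinput /= (unsplitK (inl _)) !aff_liftL.
  by rewrite !ffunE.
apply: eq_bigr => i _; rewrite /jinput /= (unsplitK (inr _)) !aff_liftR.
by rewrite !ffunE.
Qed.

End Juxt.

Lemma ord1_eq (j j' : 'I_1) : j = j'.
Proof. by apply/val_inj; case: j => -[|//] ?; case: j' => -[|//]. Qed.

Lemma andb_xorl a b c : (xorb a b) && c = xorb (a && c) (b && c).
Proof. by case: a; case: b; case: c. Qed.

Lemma xor6 a b c d e f :
  xorb (xorb a b) (xorb (xorb c d) (xorb e f)) =
  xorb (xorb a (xorb c e)) (xorb b (xorb d f)).
Proof. by case: a; case: b; case: c; case: d; case: e; case: f. Qed.

Definition aff_add n m (A B : affine n m) : affine n m :=
  Affine (xorb (aff_const A) (aff_const B))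
         [ffun j => xorb (aff_in A j) (aff_in B j)]
         [ffun k => xorb (aff_box A k) (aff_box B k)].

Lemma aff_add_eval n m (A B : affine n m) b (o : box m -> bool) :
  aff_eval (aff_add A B) b o = xorb (aff_eval A b o) (aff_eval B b o).
Proof.
rewrite /aff_eval /=.
under eq_bigr do rewrite ffunE andb_xorl.
under [X in xorb _ (xorb _ X)]eq_bigr do rewrite ffunE andb_xorl.
by rewrite !big_split /= xor6.
Qed.

Lemma big_box1 (G : box 1 -> bool) :
  \big[xorb/false]_(k : box 1) G k = xorb (G (ord0, true)) (G (ord0, false)).
Proof.
rewrite (eq_bigr (fun k => G (k.1, k.2))); last by case.
by rewrite -(pair_bigA _ (fun i s => G (i, s))) big_ord1 big_bool.
Qed.

Lemma sum_box1 (G : bool -> bool -> R) :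
  (\sum_(o : {ffun box 1 -> bool}) G (o (ord0, false)) (o (ord0, true)) =
   \sum_x \sum_y G x y)%R.
Proof.
rewrite pair_bigA /=.
rewrite (reindex (fun p : bool * bool => [ffun k : box 1 => if k.2 then p.2 else p.1])) /=.
  by apply: eq_bigr => -[x y] _; rewrite !ffunE.
exists (fun o : {ffun box 1 -> bool} => (o (ord0, false), o (ord0, true))) => [[x y] _|o _] /=.
  by rewrite !ffunE.
apply/ffunP => -[i s]; rewrite ffunE (ord1_eq i ord0); by case: s.
Qed.

Section Ext.
Variables (n M : nat) (J : l2proc n M) (A B F : affine n M).

Definition Sord := \sum_(k : box M) Defs.order J k.

Definition eorder (k : box (M + 1)) : nat :=
  match split k.1 with
  | inl i => (Defs.order J (i, k.2)).*2
  | inr _ => (Sord + k.2).*2.+1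
  end.

Lemma eorder_inj : injective eorder.
Proof.
move=> [i s] [i' s']; rewrite /eorder /=.
case E: (split i) => [j|j]; case E': (split i') => [j'|j'] => H.
- have /order_inj [Ej Es] : Defs.order J (j, s) = Defs.order J (j', s') by apply: double_inj.
  subst; by rewrite (split_eq (etrans E (esym E'))).
- by move/(congr1 odd): H; rewrite /= !odd_double.
- by move/(congr1 odd): H; rewrite /= !odd_double.
- have Es : s = s'.
    case: H => /double_inj /eqP; rewrite eqn_add2l => /eqP.
    by case: s; case: s'.
  subst; rewrite (ord1_eq j j') in E.
  by rewrite (split_eq (etrans E (esym E'))).
Qed.

Definition einput (k : box (M + 1)) : affine n (M + 1) :=
  match split k.1 with
  | inl i => liftL 1 (box_input J (i, k.2))
  | inr _ => liftL 1 (if k.2 then B else A)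
  end.

Lemma order_le_S k : Defs.order J k <= Sord.
Proof. by rewrite /Sord (bigD1 k) //= leq_addr. Qed.

Lemma einput_causal k k' : aff_box (einput k) k' -> eorder k' < eorder k.
Proof.
case: k k' => [i s] [i' s']; rewrite /einput /eorder /=.
case E: (split i) => [j|j]; rewrite /= ffunE /=; case E': (split i') => [j'|j'] //.
- by move/box_input_causal; rewrite ltn_double.
- move=> _; rewrite ltnS leq_double.
  exact: leq_trans (order_le_S _) (leq_addr _ _).
Qed.

Definition enew : affine n (M + 1) :=
  Affine false [ffun _ => false]
    [ffun k => match split k.1 with inl _ => false | inr _ => true end].

Lemma enew_eval b (o : {ffun box (M + 1) -> bool}) :
  aff_eval enew b o = xorb (o (rshift M ord0, false)) (o (rshift M ord0, true)).
Proof.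
rewrite /aff_eval /= big_box_split.
rewrite (eq_bigr (fun _ => false)); last by move=> j _; rewrite ffunE.
rewrite [X in xorb _ (xorb X _)](eq_bigr (fun _ => false)); last first.
  by move=> [j s] _; rewrite ffunE /= (unsplitK (inl _)).
rewrite big_box1 !ffunE /= !(unsplitK (inr _)) /= !big_xor_false.
by case: (o _); case: (o _).
Qed.

Definition ext : l2proc n (M + 1) :=
  L2Proc eorder_inj einput_causal (aff_add (liftL 1 F) enew).

Lemma record_ext b (o : {ffun box (M + 1) -> bool}) :
  record_prob ext b o =
  (record_prob J b (lft o) *
   chsh_prob (aff_eval A b (lft o)) (aff_eval B b (lft o))
             (o (rshift M ord0, false)) (o (rshift M ord0, true)))%R.
Proof.
rewrite /record_prob big_split_ord big_ord1 /=; congr GRing.mul.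
  apply: eq_bigr => i _; rewrite /einput /= (unsplitK (inl _)) !aff_liftL.
  by rewrite !ffunE.
by rewrite /einput /= !(unsplitK (inr _)) /= !aff_liftL.
Qed.

Lemma output_ext b c :
  output_prob ext b c =
  (\sum_(o1 : {ffun box M -> bool}) record_prob J b o1 *
     \sum_x \sum_y (if xorb (aff_eval F b o1) (xorb x y) == c
                    then chsh_prob (aff_eval A b o1) (aff_eval B b o1) x y
                    else 0))%R.
Proof.
rewrite /output_prob sum_glue; apply: eq_bigr => o1 _.
pose G := (fun x y => if xorb (aff_eval F b o1) (xorb x y) == c then
       record_prob J b o1 * chsh_prob (aff_eval A b o1) (aff_eval B b o1) x y
     else 0)%R.
rewrite (eq_bigr (fun o2 : {ffun box 1 -> bool} =>
   G (o2 (ord0, false)) (o2 (ord0, true)))); last first.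
  move=> o2 _; rewrite /G /= aff_add_eval aff_liftL enew_eval record_ext lft_glue.
  by rewrite !ffunE /= !(unsplitK (inr _)).
rewrite sum_box1 /G.
rewrite GRing.mulr_sumr; apply: eq_bigr => x _.
rewrite GRing.mulr_sumr; apply: eq_bigr => y _.
by case: ifP; rewrite ?GRing.mulr0.
Qed.

End Ext.

Import GRing.Theory.

Lemma regroup n m (P : l2proc n m) b (G : bool -> R) :
  (\sum_(o : {ffun box m -> bool}) record_prob P b o * G (aff_eval (final_output P) b o) =
   \sum_v output_prob P b v * G v)%R.
Proof.
rewrite big_bool /output_prob !mulr_suml -big_split; apply: eq_bigr => o _ /=.
by case: (aff_eval _ _ _) => /=; rewrite mul0r ?addr0 ?add0r.
Qed.

Definition aff_one n m : affine n m := Affine true [ffun _ => false] [ffun _ => false].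
Definition aff_zero n m : affine n m := Affine false [ffun _ => false] [ffun _ => false].

Lemma aff_one_eval n m b (o : box m -> bool) : aff_eval (aff_one n m) b o = true.
Proof.
rewrite /aff_eval /= (eq_bigr (fun _ => false)); last by move=> *; rewrite ffunE.
by rewrite [X in xorb _ X](eq_bigr (fun _ => false)) ?big_xor_false // => *; rewrite ffunE.
Qed.
Lemma aff_zero_eval n m b (o : box m -> bool) : aff_eval (aff_zero n m) b o = false.
Proof.
rewrite /aff_eval /= (eq_bigr (fun _ => false)); last by move=> *; rewrite ffunE.
by rewrite [X in xorb _ X](eq_bigr (fun _ => false)) ?big_xor_false // => *; rewrite ffunE.
Qed.

Definition Wn (flag v1 v2 v3 c : bool) : R :=
  (\sum_x \sum_y (if xorb v1 (xorb x y) == c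
                  then chsh_prob (xorb true (xorb v1 v2)) (xorb (flag && v1) v3) x y
                  else 0))%R.

Section Node.
Variables (n m1 m2 m3 : nat) (P1 : l2proc n m1) (P2 : l2proc n m2) (P3 : l2proc n m3)
  (flag : bool).

Definition J3 := juxt (juxt P1 P2) P3.
Definition Y1 : affine n (m1 + m2 + m3) := liftL m3 (liftL m2 (final_output P1)).
Definition Y2 : affine n (m1 + m2 + m3) := liftL m3 (liftR m1 (final_output P2)).
Definition Y3 : affine n (m1 + m2 + m3) := liftR (m1 + m2) (final_output P3).
Definition nA := aff_add (aff_one n (m1 + m2 + m3)) (aff_add Y1 Y2).
Definition nB := aff_add (if flag then Y1 else aff_zero n (m1 + m2 + m3)) Y3.

Definition node : l2proc n (m1 + m2 + m3 + 1) := ext J3 nA nB Y1.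

Lemma output_node b c :
  output_prob node b c =
  (\sum_v1 output_prob P1 b v1 *
   (\sum_v2 output_prob P2 b v2 *
    (\sum_v3 output_prob P3 b v3 * Wn flag v1 v2 v3 c)))%R.
Proof.
rewrite output_ext sum_glue.
pose y1 o := aff_eval (final_output P1) b o.
pose y2 o := aff_eval (final_output P2) b o.
pose H v1 v2 := (\sum_v3 output_prob P3 b v3 * Wn flag v1 v2 v3 c)%R.
transitivity (\sum_(o12 : {ffun box (m1 + m2) -> bool})
   record_prob (juxt P1 P2) b o12 * H (y1 (lft o12)) (y2 (rgt o12)))%R.
  apply: eq_bigr => o12 _; rewrite /H -regroup mulr_sumr.
  apply: eq_bigr => o3 _.
  rewrite /J3 record_juxt lft_glue rgt_glue -mulrA; do 2 congr GRing.mul.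
  rewrite /Wn /nA /nB !aff_add_eval aff_one_eval /Y1 /Y2 /Y3.
  case: flag; rewrite ?aff_zero_eval !aff_liftL ?aff_liftR !lft_glue !rgt_glue ?aff_liftL ?aff_liftR //.
rewrite sum_glue; rewrite /y1 /y2.
under eq_bigr do under eq_bigr do rewrite record_juxt lft_glue rgt_glue -mulrA.
under eq_bigr do rewrite -mulr_sumr (regroup P2 b (fun v2 => H _ v2)).
exact: (regroup P1 b (fun v1 => \sum_v2 output_prob P2 b v2 * H v1 v2)%R).
Qed.

End Node.

Local Open Scope R_scope.

Lemma inv_sqrt2_sq : / sqrt 2 * / sqrt 2 = / 2.
Proof. rewrite <- Rinv_mult, sqrt_sqrt; lra. Qed.

Lemma amp_sum (a b : R) d :
  (\sum_(x : bool) \sum_(y : bool) (if xorb x y == d then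
    (let amp := (\sum_(i : bool) \sum_(j : bool)
                eigvec a x i * eigvec b y j * bell i j)%R
     in (amp * amp)%R) else 0))%R
  = if d then sin ((a - b)/2) * sin ((a - b)/2) else cos ((a - b)/2) * cos ((a-b)/2).
Proof.
rewrite !big_bool /eigvec /bell /=.
replace ((a-b)/2) with (a/2 - b/2) by field.
rewrite cos_minus sin_minus.
have Hu := inv_sqrt2_sq.
case: d => /=; rewrite -!RmultE -!RplusE; 
set u := / sqrt 2; set ca := cos (a/2); set sa := sin (a/2); set cb := cos (b/2); set sb := sin (b/2).
all: rewrite -?R0E.
- transitivity (2 * ((sa*cb - ca*sb)*(sa*cb - ca*sb)) * (u*u)); [ring | rewrite Hu; field].
- transitivity (2 * ((ca*cb + sa*sb)*(ca*cb + sa*sb)) * (u*u)); [ring | rewrite Hu; field].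
Qed.

Definition Cc := cos (PI/8) * cos (PI/8).
Definition Sc := sin (PI/8) * sin (PI/8).

Lemma chsh_sum a bb d :
  (\sum_(x : bool) \sum_(y : bool) (if xorb x y == d then chsh_prob a bb x y else 0))%R
  = if d == (~~a && bb) then Cc else Sc.
Proof.
rewrite /chsh_prob amp_sum /Cc /Sc.
have E1 : forall x, sin (- x) * sin (- x) = sin x * sin x.
  by move=> x; rewrite sin_neg; ring.
have E2 : forall x, cos (- x) * cos (- x) = cos x * cos x.
  by move=> x; rewrite cos_neg.
case: a; case: bb; case: d; rewrite /angleA /angleB /=.
- replace ((PI / 2 - 3 * PI / 4) / 2) with (- (PI/8)) by field; by rewrite E1.
- replace ((PI / 2 - 3 * PI / 4) / 2) with (- (PI/8)) by field; by rewrite E2.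
- by replace ((PI / 2 - PI / 4) / 2) with (PI/8) by field.
- by replace ((PI / 2 - PI / 4) / 2) with (PI/8) by field.
- replace ((0 - 3 * PI / 4) / 2) with (- (PI/2 - PI/8)) by field.
  by rewrite E1 sin_shift.
- replace ((0 - 3 * PI / 4) / 2) with (- (PI/2 - PI/8)) by field.
  by rewrite E2 cos_shift.
- replace ((0 - PI / 4) / 2) with (- (PI/8)) by field; by rewrite E1.
- replace ((0 - PI / 4) / 2) with (- (PI/8)) by field; by rewrite E2.
Qed.

Import Num.Theory.
Ltac toR := repeat match goal with
  | |- context [@Algebra.add ?T ?x ?y] => change (@Algebra.add T x y) with (Rplus x y)
  | |- context [@GRing.mul ?T ?x ?y] => change (@GRing.mul T x y) with (Rmult x y)
  | |- context [@Algebra.zero ?T] => change (@Algebra.zero T) with R0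
  | |- context [@GRing.one ?T] => change (@GRing.one T) with R1
  end.

Lemma CcSc : Cc = 1 - Sc.
Proof. have := sin2_cos2 (PI/8); rewrite /Cc /Sc /Rsqr; lra. Qed.

Lemma Sc_val : Sc = (1 - 1 / sqrt 2) / 2.
Proof.
have := cos_2a_sin (PI/8).
replace (2 * (PI/8)) with (PI/4) by field.
rewrite cos_PI4 /Sc; lra.
Qed.

Lemma sqrt2_bounds : 1.4142 < sqrt 2 < 1.41422.
Proof.
have H := sqrt_sqrt 2 ltac:(lra).
have H0 := sqrt_pos 2.
split; nra.
Qed.

Lemma Sc_bounds : 0.1464 <= Sc <= 0.14645.
Proof.
rewrite Sc_val; have [H1 H2] := sqrt2_bounds.
have Hp : 0 < sqrt 2 by lra.
split.
- apply (Rmult_le_reg_r (2 * sqrt 2)); first lra.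
  field_simplify; try lra. 
- apply (Rmult_le_reg_r (2 * sqrt 2)); first lra.
  field_simplify; try lra.
Qed.

Lemma xorb_eq_swap v x y c : (xorb v (xorb x y) == c) = (xorb x y == xorb v c).
Proof. by case: v; case: x; case: y; case: c. Qed.

Lemma Wn_eval flag v1 v2 v3 c :
  Wn flag v1 v2 v3 c =
  if c == xorb v1 (xorb v1 v2 && xorb (flag && v1) v3) then Cc else Sc.
Proof.
rewrite /Wn.
under eq_bigr => x _ do under eq_bigr => y _ do rewrite xorb_eq_swap.
rewrite chsh_sum.
by case: v1; case: v2; case: v3; case: c; case: flag.
Qed.

Section Leaf.
Variables (n : nat) (A : affine n 0).
Definition leaf_order (k : box 0) : nat := 0.
Lemma leaf_inj : injective leaf_order. Proof. by move=> [[]]. Qed.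
Lemma leaf_causal (k k' : box 0) :
  aff_box (aff_zero n 0) k' -> (leaf_order k' < leaf_order k)%N.
Proof. by case: k => -[]. Qed.
Definition leaf : l2proc n 0 :=
  L2Proc leaf_inj (fun k : box 0 => @leaf_causal k) A.
Definition o0 : {ffun box 0 -> bool} := [ffun _ => false].

Lemma output_leaf b c :
  output_prob leaf b c = if aff_eval A b o0 == c then 1 else 0.
Proof.
rewrite /output_prob (eq_bigr (fun _ => if aff_eval A b o0 == c then 1 else 0)%R).
  rewrite sumr_const card_ffun card_prod card_ord /= expn0 GRing.mulr1n.
  by case: ifP.
move=> o _; have -> : o = o0 by apply/ffunP => -[[]].
by rewrite /record_prob big_ord0.
Qed.
End Leaf.

Lemma aff_in0_eval n (c : bool) b :
  aff_eval (Affine c [ffun _ : 'I_n => false] [ffun _ : box 0 => false]) b (o0) = c.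
Proof.
rewrite /aff_eval /= (eq_bigr (fun _ => false)); last by move=> *; rewrite ffunE.
by rewrite [X in xorb _ (xorb _ X)](eq_bigr (fun _ => false)) ?big_xor_false ?xorb_false_r' // => *; rewrite ffunE.
Qed.

Lemma aff_var_eval n (k : 'I_n) (b : 'I_n -> bool) :
  aff_eval (Affine false [ffun j : 'I_n => j == k] [ffun _ : box 0 => false]) b (o0) = b k.
Proof.
rewrite /aff_eval /= [X in xorb _ X](eq_bigr (fun _ => false)) ?big_xor_false; last first.
  by move=> *; rewrite ffunE.
rewrite (bigD1 k) //= ffunE eqxx /= big1 ?xorb_false_r' //.
by move=> j /negbTE Hj; rewrite ffunE Hj.
Qed.

Definition inv n m (P : l2proc n m) (b : 'I_n -> bool) : Prop :=
  0 <= output_prob P b true /\ 0 <= output_prob P b false /\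
  output_prob P b true + output_prob P b false = 1.

Definition good n (g : {ffun 'I_n -> bool} -> bool) (p : R) : Prop :=
  exists m (P : l2proc n m), forall b : {ffun 'I_n -> bool},
    inv P b /\ output_prob P b (~~ g b) <= p.

Lemma good_ext n (g g' : {ffun 'I_n -> bool} -> bool) p :
  (forall b, g b = g' b) -> good g p -> good g' p.
Proof. by move=> E [m [P H]]; exists m, P => b; rewrite -E. Qed.

Lemma good_weaken n (g : {ffun 'I_n -> bool} -> bool) p p' :
  p <= p' -> good g p -> good g p'.
Proof.
move=> Hp [m [P H]]; exists m, P => b; have [H1 H2] := H b; split => //; lra.
Qed.

Lemma good_leaf n (A : affine n 0) :
  good (fun b => aff_eval A b o0) 0.
Proof.
exists 0%N, (leaf A) => b; rewrite /inv !output_leaf.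
by case: (aff_eval A b o0) => /=; split; lra.
Qed.

Lemma Sc_ge0 : 0 <= Sc. Proof. rewrite /Sc; nra. Qed.
Lemma Cc_ge0 : 0 <= Cc. Proof. rewrite /Cc; nra. Qed.

Lemma Wn_ge0 flag v1 v2 v3 c : 0 <= Wn flag v1 v2 v3 c.
Proof. rewrite Wn_eval; case: ifP => _; [exact: Cc_ge0 | exact: Sc_ge0]. Qed.

Lemma node_inv n m1 m2 m3 (P1 : l2proc n m1) (P2 : l2proc n m2) (P3 : l2proc n m3)
  flag b : inv P1 b -> inv P2 b -> inv P3 b -> inv (node P1 P2 P3 flag) b.
Proof.
move=> [a1 [b1 c1]] [a2 [b2 c2]] [a3 [b3 c3]].
have nn : forall c, 0 <= output_prob (node P1 P2 P3 flag) b c.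
  move=> c; rewrite output_node; apply/RleP.
  apply: sumr_ge0 => v1 _; apply: mulr_ge0; first by case: v1; apply/RleP.
  apply: sumr_ge0 => v2 _; apply: mulr_ge0; first by case: v2; apply/RleP.
  apply: sumr_ge0 => v3 _; apply: mulr_ge0; first by case: v3; apply/RleP.
  by apply/RleP; apply: Wn_ge0.
split; first exact: nn. split; first exact: nn.
rewrite !output_node !big_bool !Wn_eval CcSc.
have -> : output_prob P1 b true = 1 - output_prob P1 b false by lra.
have -> : output_prob P2 b true = 1 - output_prob P2 b false by lra.
have -> : output_prob P3 b true = 1 - output_prob P3 b false by lra.
clear nn; by case: flag => /=; toR; ring.
Qed.

Lemma cubic_mono e p : 0 <= e -> e <= p -> p <= 1/2 ->
  3* e* e - 2* e* e* e <= 3* p* p - 2* p* p* p.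
Proof.
move=> h0 h1 h2.
have F : 0 <= 3*(p+e) - 2*(p * p+p * e+e * e) by nra.
have G : 0 <= (p - e) * (3*(p+e) - 2*(p * p+p * e+e * e)) by apply Rmult_le_pos; lra.
nra.
Qed.

Lemma good_maj n (g : {ffun 'I_n -> bool} -> bool) p :
  0 <= p <= 1/2 -> good g p -> good g (Sc + (1 - 2*Sc) * (3* p* p - 2* p* p* p)).
Proof.
move=> [p0 p1] [m [P H]]; exists (m + m + m + 1)%N, (node P P P true) => b.
have [[a [bb c]] He] := H b.
split; first by apply: node_inv.
have [S0 S1] := Sc_bounds.
rewrite output_node !big_bool !Wn_eval CcSc.
case E: (g b) He => /= He.
- have -> : output_prob P b true = 1 - output_prob P b false by lra.
  toR; set e := output_prob P b false in He a bb *.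
  have Hm := cubic_mono bb He p1.
  apply Rle_trans with (Sc + (1-2*Sc)*(3* e* e - 2* e* e* e)); first (right; ring).
  nra.
- have -> : output_prob P b false = 1 - output_prob P b true by lra.
  toR; set e := output_prob P b true in He a bb *.
  have Hm := cubic_mono a He p1.
  apply Rle_trans with (Sc + (1-2*Sc)*(3* e* e - 2* e* e* e)); first (right; ring).
  nra.
Qed.

Lemma inv_leaf n (A : affine n 0) b : inv (leaf A) b.
Proof. rewrite /inv !output_leaf; by case: (aff_eval A b o0) => /=; split; lra. Qed.

Lemma good_mux n (k : 'I_n) (g0 g1 : {ffun 'I_n -> bool} -> bool) p :
  0 <= p -> good g0 p -> good g1 p ->
  good (fun b => if b k then g1 b else g0 b) (Sc + (1 - 2*Sc) * p).
Proof.
move=> p0 [m0 [P0 H0]] [m1 [P1 H1]].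
pose L := leaf (Affine false [ffun j : 'I_n => j == k] [ffun _ : box 0 => false]).
exists (m0 + m1 + 0 + 1)%N, (node P0 P1 L false) => b.
have [[a0 [b0 c0]] He0] := H0 b.
have [[a1 [b1 c1]] He1] := H1 b.
split; first by apply: node_inv => //; apply: inv_leaf.
have [S0 S1] := Sc_bounds.
rewrite output_node !big_bool !Wn_eval CcSc /L !output_leaf aff_var_eval.
have -> : output_prob P0 b true = 1 - output_prob P0 b false by lra.
have -> : output_prob P1 b true = 1 - output_prob P1 b false by lra.
case: (b k) => /=; case: (g0 b) He0 => /= He0; case: (g1 b) He1 => /= He1; toR; nra.
Qed.

Lemma amp_step n (g : {ffun 'I_n -> bool} -> bool) (r r' : R) :
  0 <= r <= 1/2 ->
  0.14645 + (1 - 2 * 0.14645) * (3 * r * r - 2 * r * r * r) <= r' ->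
  good g r -> good g r'.
Proof.
move=> [h0 h1] Hn H; have := good_maj (conj h0 h1) H; apply: good_weaken.
have [S0 S1] := Sc_bounds.
have M1 := cubic_mono h0 h1 (Rle_refl (1/2)).
have M0 : 0 <= 3 * r * r - 2 * r * r * r by nra.
nra.
Qed.

Lemma amplify n (g : {ffun 'I_n -> bool} -> bool) :
  good g 0.42929 -> good g 0.4.
Proof.
move=> H.
have {}H := amp_step (r := 0.42929) (r' := 0.42551) ltac:(lra) ltac:(lra) H.
have {}H := amp_step (r := 0.42551) (r' := 0.42158) ltac:(lra) ltac:(lra) H.
have {}H := amp_step (r := 0.42158) (r' := 0.41751) ltac:(lra) ltac:(lra) H.
have {}H := amp_step (r := 0.41751) (r' := 0.41331) ltac:(lra) ltac:(lra) H.
have {}H := amp_step (r := 0.41331) (r' := 0.40898) ltac:(lra) ltac:(lra) H.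
have {}H := amp_step (r := 0.40898) (r' := 0.40453) ltac:(lra) ltac:(lra) H.
have {}H := amp_step (r := 0.40453) (r' := 0.39998) ltac:(lra) ltac:(lra) H.
apply: (good_weaken _ H); lra.
Qed.

Lemma mux_step n (k : 'I_n) (g0 g1 : {ffun 'I_n -> bool} -> bool) :
  good g0 0.4 -> good g1 0.4 -> good (fun b => if b k then g1 b else g0 b) 0.4.
Proof.
move=> H0 H1; apply: amplify.
have := good_mux (p := 0.4) k ltac:(lra) H0 H1; apply: good_weaken.
have [S0 S1] := Sc_bounds; lra.
Qed.

Definition dep n k (g : {ffun 'I_n -> bool} -> bool) :=
  forall b b' : {ffun 'I_n -> bool},
    (forall i : 'I_n, (i < k)%N -> b i = b' i) -> g b = g b'.
Definition setb n (b : {ffun 'I_n -> bool}) (k : 'I_n) (v : bool) : {ffun 'I_n -> bool} :=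
  [ffun i => if i == k then v else b i].

Lemma all_good n : forall k, (k <= n)%N -> forall g : {ffun 'I_n -> bool} -> bool, dep k g -> good g 0.4.
Proof.
elim => [|k IH] Hk g Hg.
  have E : forall b, g b = g [ffun _ => false] by move=> b; apply: Hg.
  apply: (good_ext (n := n) (g := fun b => aff_eval (Affine (g [ffun _ => false])
             [ffun _ : 'I_n => false] [ffun _ : box 0 => false]) b o0)).
    by move=> b; rewrite aff_in0_eval E.
  apply: (good_weaken _ (good_leaf _)); lra.
have kn : (k < n)%N by [].
pose kk := Ordinal kn.
have D : forall v, dep k (fun b => g (setb b kk v)).
  move=> v b b' Hbb; apply: Hg => i Hi; rewrite !ffunE; case: eqP => // Hne.
  apply: Hbb; move: Hi; rewrite ltnS leq_eqVlt => /orP [/eqP H'|//].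
  by exfalso; apply: Hne; apply: val_inj.
have := mux_step kk (IH (ltnW Hk) _ (D false)) (IH (ltnW Hk) _ (D true)).
apply: good_ext => b; case E: (b kk); congr g; apply/ffunP => i; rewrite ffunE;
  by case: eqP => // ->.
Qed.

Theorem mainTheorem1 :
  exists delta : R, (delta < 1 / 2)%R /\
    forall (n : nat), (1 <= n)%N ->
    forall f : {ffun 'I_n -> bool} -> bool,
    exists (m : nat) (P : l2proc n m),
      forall b : {ffun 'I_n -> bool},
        (1 - delta <= output_prob P b (f b))%R.
Proof.
exists 0.4; split.
  apply/RltP; change (0.4 < 1 * / 2); lra.
move=> n _ f.
have Df : dep n f.
  by move=> b b' E; congr f; apply/ffunP => i; exact: E i (ltn_ord i).
have [m [P H]] := all_good (leqnn n) Df.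
exists m, P => b; have [[a [bb c]] He] := H b.
apply/RleP; change (1 - 0.4 <= output_prob P b (f b)).
by case: (f b) He a bb => /= He a bb; lra.
Qed.
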